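(* Let $(Z,Z_{ac},e)$ be an accretive archimedean matrix-order unit space. For $z\in M_n(Z)$ define $\nu_e^n(z)=\inf\{t>0: te\otimes I_n-z\in Z_{ac}^n\}$. Then $\nu_e=\{\nu_e^n\}$ is a matrix gauge on $Z$ (so $(Z,\nu_e)$ is a matrix gauge space), and for each $n$, $Z_{ac}^n=\{z\in M_n(Z):\nu_e^n(-z)=0\}$.
   Context: For a complex vector space $Z$, $M_n(Z)$ is the $n\times n$ matrices over $Z$; $e\otimes I_n$ is the diagonal matrix with all diagonal entries $e$. A cone is a set $C$ with $C+C\subseteq C$, $tC\subseteq C$ ($t\ge0$); a matrix cone is a sequence of cones $C_n\subseteq M_n(Z)$ with $X^*C_nX\subseteq C_k$ for scalar $X\in M_{n,k}$; it is $\mathbb{C}$-proper if $C_1\cap-C_1\cap iC_1\cap-iC_1=\{0\}$, making $(Z,Z_{ac})$ an accretive matrix-ordered vector space, with $Z_{sa}^n=iZ_{ac}^n\cap-iZ_{ac}^n$. An element $e\in Z_{sa}^1$ is an accretive matrix-order unit if for each $n$ and $z\in M_n(Z)$ there is $t>0$ with $te\otimes I_n+z\in Z_{ac}^n$; it is archimedean if $te\otimes I_n+z\in Z_{ac}^n$ for all $t>0$ implies $z\in Z_{ac}^n$; then $(Z,Z_{ac},e)$ is an accretive archimedean matrix-order unit space. A matrix gauge is a sequence $\{\nu_n:M_n(Z)\to[0,\infty)\}$ with $\nu_n(x+y)\le\nu_n(x)+\nu_n(y)$, $\nu_n(tx)=t\nu_n(x)$ ($t\ge0$), $\nu_k(X^*AX)\le\|X\|^2\nu_n(A)$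 for scalar $X\in M_{n,k}$, and $\nu_{n+m}(A\oplus B)=\max\{\nu_n(A),\nu_m(B)\}$. *)

(* Defs.v *)
From mathcomp Require Import all_boot.
From mathcomp Require Import matrix.
From Stdlib Require Import Reals ClassicalEpsilon.
Set Implicit Arguments. Unset Strict Implicit. Unset Printing Implicit Defensive.
Local Open Scope R_scope.

Record Cplx := Cmk { Cre : R; Cim : R }.
Definition Cadd (a b : Cplx) := Cmk (Cre a + Cre b) (Cim a + Cim b).
Definition Cmul (a b : Cplx) :=
  Cmk (Cre a * Cre b - Cim a * Cim b) (Cre a * Cim b + Cim a * Cre b).
Definition Cconj (a : Cplx) := Cmk (Cre a) (- Cim a).
Definition Cnorm2 (a : Cplx) : R := Cre a * Cre a + Cim a * Cim a.
Definition Creal (t : R) := Cmk t 0.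
Definition C1 := Creal 1.
Definition Ci := Cmk 0 1.
Definition Cm1 := Creal (-1).
Definition Cmi := Cmk 0 (-1).

Record CVS := {
  vcar :> Type;
  vadd : vcar -> vcar -> vcar;
  vzero : vcar;
  vscal : Cplx -> vcar -> vcar;
  vadd_assoc : forall x y z, vadd x (vadd y z) = vadd (vadd x y) z;
  vadd_comm : forall x y, vadd x y = vadd y x;
  vadd_0 : forall x, vadd vzero x = x;
  vadd_opp : forall x, vadd (vscal Cm1 x) x = vzero;
  vscal_1 : forall x, vscal C1 x = x;
  vscal_assoc : forall a b x, vscal a (vscal b x) = vscal (Cmul a b) x;
  vscal_distr_v : forall a x y, vscal a (vadd x y) = vadd (vscal a x) (vscal a y);
  vscal_distr_c : forall a b x, vscal (Cadd a b) x = vadd (vscal a x) (vscal b x)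
}.

Section MatOps.
Variable Z : CVS.

Definition madd n (A B : 'M[Z]_n) : 'M[Z]_n := \matrix_(i, j) vadd (A i j) (B i j).
Definition mscal n (a : Cplx) (A : 'M[Z]_n) : 'M[Z]_n := \matrix_(i, j) vscal a (A i j).
Definition mopp n (A : 'M[Z]_n) : 'M[Z]_n := mscal Cm1 A.
Definition mzero m k : 'M[Z]_(m, k) := const_mx (vzero Z).
Definition eI (e : Z) n : 'M[Z]_n := \matrix_(i, j) if i == j then e else vzero Z.
Definition congr_mx n k (X : 'M[Cplx]_(n, k)) (A : 'M[Z]_n) : 'M[Z]_k :=
  \matrix_(i, j) \big[@vadd Z/vzero Z]_(p < n) \big[@vadd Z/vzero Z]_(q < n)
      vscal (Cmul (Cconj (X p i)) (X q j)) (A p q).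
Definition dsum n m (A : 'M[Z]_n) (B : 'M[Z]_m) : 'M[Z]_(n + m) :=
  block_mx A (mzero n m) (mzero m n) B.
Definition mx1 (z : Z) : 'M[Z]_1 := \matrix_(i, j) z.
End MatOps.

Definition vnorm2 n (v : 'I_n -> Cplx) : R := \big[Rplus/0]_(i < n) Cnorm2 (v i).
Definition mxapply n k (X : 'M[Cplx]_(n, k)) (v : 'I_k -> Cplx) : 'I_n -> Cplx :=
  fun i => \big[Cadd/Creal 0]_(j < k) Cmul (X i j) (v j).
(* c is a bound for X : ||X v|| <= c ||v|| for all v; ||X|| is the least such c >= 0 *)
Definition opnorm_bound n k (X : 'M[Cplx]_(n, k)) (c : R) : Prop :=
  0 <= c /\ forall v, vnorm2 (mxapply X v) <= c * c * vnorm2 v.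

Definition is_lower_bound (E : R -> Prop) (m : R) := forall x, E x -> m <= x.
Definition is_glb (E : R -> Prop) (m : R) :=
  is_lower_bound E m /\ forall b, is_lower_bound E b -> b <= m.
Definition Rinf (E : R -> Prop) : R := epsilon (inhabits 0) (is_glb E).

Definition MatCone (Z : CVS) := forall n, 'M[Z]_n -> Prop.

Definition is_matrix_cone (Z : CVS) (C : MatCone Z) : Prop :=
  (forall n A B, C n A -> C n B -> C n (madd A B)) /\
  (forall n (t : R) A, 0 <= t -> C n A -> C n (mscal (Creal t) A)) /\
  (forall n k (X : 'M[Cplx]_(n, k)) A, C n A -> C k (congr_mx X A)).

Definition C_proper (Z : CVS) (C : MatCone Z) : Prop :=
  forall x : 'M[Z]_1,
    (C 1%nat x /\ C 1%nat (mopp x) /\ C 1%nat (mscal Cmi x) /\ C 1%nat (mscal Ci x))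
    <-> x = mzero Z 1 1.

Definition in_sa (Z : CVS) (C : MatCone Z) n (x : 'M[Z]_n) : Prop :=
  C n (mscal Cmi x) /\ C n (mscal Ci x).

Definition is_order_unit (Z : CVS) (C : MatCone Z) (e : Z) : Prop :=
  in_sa C (mx1 e) /\
  forall n (z : 'M[Z]_n), exists t : R, 0 < t /\ C n (madd (mscal (Creal t) (eI e n)) z).

Definition is_archimedean (Z : CVS) (C : MatCone Z) (e : Z) : Prop :=
  forall n (z : 'M[Z]_n),
    (forall t : R, 0 < t -> C n (madd (mscal (Creal t) (eI e n)) z)) -> C n z.

Definition accretive_AMOU_space (Z : CVS) (C : MatCone Z) (e : Z) : Prop :=
  is_matrix_cone C /\ C_proper C /\ is_order_unit C e /\ is_archimedean C e.

Definition is_matrix_gauge (Z : CVS) (nu : forall n, 'M[Z]_n -> R) : Prop :=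
  (forall n x, 0 <= nu n x) /\
  (forall n x y, nu n (madd x y) <= nu n x + nu n y) /\
  (forall n (t : R) x, 0 <= t -> nu n (mscal (Creal t) x) = t * nu n x) /\
  (forall n k (X : 'M[Cplx]_(n, k)) A c,
      opnorm_bound X c -> nu k (congr_mx X A) <= c * c * nu n A) /\
  (forall n m (A : 'M[Z]_n) (B : 'M[Z]_m), nu (n + m)%nat (dsum A B) = Rmax (nu n A) (nu m B)).

Definition nu_e (Z : CVS) (C : MatCone Z) (e : Z) n (z : 'M[Z]_n) : R :=
  Rinf (fun t => 0 < t /\ C n (madd (mscal (Creal t) (eI e n)) (mopp z))).

(* Main.v *)
Require Import Defs.
From HB Require Import structures.
From mathcomp Require Import all_boot.
From mathcomp Require Import matrix.
From Stdlib Require Import Reals Lra ClassicalEpsilon Classical.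
Set Implicit Arguments. Unset Strict Implicit. Unset Printing Implicit Defensive.
Local Open Scope R_scope.

Lemma Cext a b : Cre a = Cre b -> Cim a = Cim b -> a = b.
Proof. by case: a b => [? ?] [? ?] /= -> ->. Qed.

Ltac cring := apply: Cext => /=; ring.

Lemma Cadd_assoc : associative Cadd. Proof. move=> ???; cring. Qed.
Lemma Cadd_comm : commutative Cadd. Proof. move=> ??; cring. Qed.
Lemma Cadd_0 : left_id (Creal 0) Cadd. Proof. move=> [??]; cring. Qed.
HB.instance Definition _ := Monoid.isComLaw.Build Cplx (Creal 0) Cadd Cadd_assoc Cadd_comm Cadd_0.

Lemma Rplus_assoc' : associative Rplus. Proof. move=> ???; ring. Qed.
Lemma Rplus_comm' : commutative Rplus. Proof. move=> ??; ring. Qed.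
Lemma Rplus_0' : left_id 0 Rplus. Proof. move=> ?; ring. Qed.
HB.instance Definition _ := Monoid.isComLaw.Build R 0 Rplus Rplus_assoc' Rplus_comm' Rplus_0'.


Lemma Cmul_sumr I (r : seq I) (P : pred I) F c :
  Cmul c (\big[Cadd/Creal 0]_(i <- r | P i) F i) = \big[Cadd/Creal 0]_(i <- r | P i) Cmul c (F i).
Proof. apply: (big_morph (Cmul c)) => [x y|]; cring. Qed.
Lemma Cmul_suml I (r : seq I) (P : pred I) F c :
  Cmul (\big[Cadd/Creal 0]_(i <- r | P i) F i) c = \big[Cadd/Creal 0]_(i <- r | P i) Cmul (F i) c.
Proof. apply: (big_morph (Cmul^~ c)) => [x y|]; cring. Qed.
Lemma Cconj_sum I (r : seq I) (P : pred I) F :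
  Cconj (\big[Cadd/Creal 0]_(i <- r | P i) F i) = \big[Cadd/Creal 0]_(i <- r | P i) Cconj (F i).
Proof. apply: (big_morph Cconj) => [x y|]; cring. Qed.
Lemma Cre_sum I (r : seq I) (P : pred I) F :
  Cre (\big[Cadd/Creal 0]_(i <- r | P i) F i) = \big[Rplus/0]_(i <- r | P i) Cre (F i).
Proof. by apply: (big_morph Cre). Qed.
Lemma Rsum_ge0 I (r : seq I) (P : pred I) (F : I -> R) :
  (forall i, P i -> 0 <= F i) -> 0 <= \big[Rplus/0]_(i <- r | P i) F i.
Proof. move=> H; apply: (big_ind (fun x => 0 <= x)) => //; [lra | move=> ??; lra]. Qed.
Lemma Rsum_scal I (r : seq I) (P : pred I) (F : I -> R) c :
  c * \big[Rplus/0]_(i <- r | P i) F i = \big[Rplus/0]_(i <- r | P i) (c * F i).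
Proof. apply: (big_morph (Rmult c)) => [x y|]; ring. Qed.
Lemma Rinf_spec (S : R -> Prop) : (exists x, S x) -> (forall x, S x -> 0 <= x) -> is_glb S (Rinf S).
Proof.
move=> [x0 Hx0] Hpos; rewrite /Rinf.
apply: epsilon_spec.
have Hb : bound (fun y => S (- y)).
  exists 0 => y Hy; have := Hpos _ Hy; lra.
have He : exists y, S (- y) by exists (- x0); rewrite Ropp_involutive.
case: (completeness _ Hb He) => m [Hub Hl].
exists (- m); split.
- move=> y Hy; have : - y <= m by apply: Hub; rewrite Ropp_involutive.
  lra.
- move=> b Hb'; have : m <= - b.
    apply: Hl => y Hy; have := Hb' _ Hy; lra.
  lra.
Qed.

Lemma glb_le S m x : is_glb S m -> S x -> m <= x.
Proof. by case=> H _; apply: H. Qed.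
Lemma glb_ge S m b : is_glb S m -> (forall x, S x -> b <= x) -> b <= m.
Proof. by case=> _ H; apply: H. Qed.

Lemma le_eps (x y : R) : (forall d, 0 < d -> x <= y + d) -> x <= y.
Proof.
move=> H; apply: Rnot_lt_le => Hlt.
have := H ((x - y) / 2) ltac:(lra); lra.
Qed.

Definition Id n : 'M[Cplx]_n := \matrix_(i, j) if i == j then Defs.C1 else Creal 0.
Definition O1 : 'M[Cplx]_1 := \matrix_(i, j) Defs.C1.
Definition cmx n k (X : 'M[Cplx]_(n, k)) (P : 'M[Cplx]_n) : 'M[Cplx]_k :=
  \matrix_(i, j) \big[Cadd/Creal 0]_(p < n) \big[Cadd/Creal 0]_(q < n)
      Cmul (Cmul (Cconj (X p i)) (X q j)) (P p q).
Definition form n (P : 'M[Cplx]_n) (v : 'I_n -> Cplx) : Cplx :=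
  \big[Cadd/Creal 0]_(i < n) \big[Cadd/Creal 0]_(j < n) Cmul (Cmul (Cconj (v i)) (P i j)) (v j).
Definition herm n (P : 'M[Cplx]_n) := forall i j, P j i = Cconj (P i j).
Definition pd n (P : 'M[Cplx]_n) d := forall v, d * vnorm2 v <= Cre (form P v).
Definition XX n k (X : 'M[Cplx]_(n, k)) : 'M[Cplx]_k :=
  \matrix_(i, j) \big[Cadd/Creal 0]_(p < n) Cmul (Cconj (X p i)) (X p j).

Lemma Csum_delta n (i0 : 'I_n) (F : 'I_n -> Cplx) :
  (forall i, i != i0 -> F i = Creal 0) -> \big[Cadd/Creal 0]_(i < n) F i = F i0.
Proof. by move=> H; rewrite (bigD1 i0) //= big1 ?Monoid.mulm1. Qed.
Arguments Csum_delta [n] i0 [F].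
Lemma Csum0 n (F : 'I_n -> Cplx) :
  (forall i, F i = Creal 0) -> \big[Cadd/Creal 0]_(i < n) F i = Creal 0.
Proof. by move=> H; rewrite big1. Qed.

Lemma cmx_Id n k (X : 'M[Cplx]_(n, k)) : cmx X (Id n) = XX X.
Proof.
apply/matrixP => i j; rewrite !mxE; apply: eq_bigr => p _.
rewrite (Csum_delta p) => [|q Hq]; rewrite mxE ?eqxx.
  cring.
by rewrite eq_sym (negbTE Hq); cring.
Qed.

Lemma form_lin n (P Q : 'M[Cplx]_n) a b v :
  form (\matrix_(i, j) Cadd (Cmul (Creal a) (P i j)) (Cmul (Creal b) (Q i j))) v =
  Cadd (Cmul (Creal a) (form P v)) (Cmul (Creal b) (form Q v)).
Proof.
rewrite /form !Cmul_sumr -big_split; apply: eq_bigr => i _.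
rewrite !Cmul_sumr -big_split; apply: eq_bigr => j _; rewrite mxE; cring.
Qed.

Lemma form_Id n v : Cre (form (Id n) v) = vnorm2 v.
Proof.
rewrite /form Cre_sum /vnorm2; apply: eq_bigr => i _.
rewrite (Csum_delta i) => [|j Hj]; rewrite mxE ?eqxx /=.
  rewrite /Cnorm2; ring.
by rewrite eq_sym (negbTE Hj); cring.
Qed.
Definition lincomb n (P Q : 'M[Cplx]_n) a b : 'M[Cplx]_n :=
  \matrix_(i, j) Cadd (Cmul (Creal a) (P i j)) (Cmul (Creal b) (Q i j)).

Lemma form_XX n k (X : 'M[Cplx]_(n, k)) v :
  Cre (form (XX X) v) = vnorm2 (mxapply X v).
Proof.
have -> : form (XX X) v =
   \big[Cadd/Creal 0]_(p < n) Cmul (Cconj (mxapply X v p)) (mxapply X v p).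
  rewrite /form /mxapply.
  under eq_bigr => i _ do (under eq_bigr => j _ do rewrite mxE Cmul_sumr Cmul_suml; rewrite exchange_big).
  rewrite exchange_big; apply: eq_bigr => p _.
  rewrite Cconj_sum Cmul_suml; apply: eq_bigr => i _.
  rewrite Cmul_sumr; apply: eq_bigr => j _; cring.
rewrite Cre_sum /vnorm2; apply: eq_bigr => p _ /=; rewrite /Cnorm2; ring.
Qed.

Lemma herm_Id n : herm (Id n).
Proof. move=> i j; rewrite !mxE eq_sym; case: (_ == _); cring. Qed.

Lemma herm_XX n k (X : 'M[Cplx]_(n, k)) : herm (XX X).
Proof.
move=> i j; rewrite !mxE Cconj_sum; apply: eq_bigr => p _; cring.
Qed.

Lemma herm_lin n (P Q : 'M[Cplx]_n) a b : herm P -> herm Q ->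
  herm (\matrix_(i, j) Cadd (Cmul (Creal a) (P i j)) (Cmul (Creal b) (Q i j))).
Proof. move=> hP hQ i j; rewrite !mxE hP hQ; cring. Qed.

Section Chol.
Variables (k : nat) (P : 'M[Cplx]_k.+1) (d : R).
Hypotheses (hP : herm P) (hd : 0 < d) (hpd : pd P d).

Definition pa := Cre (P ord0 ord0).

Lemma P00_im : Cim (P ord0 ord0) = 0.
Proof. have := hP ord0 ord0; case: (P ord0 ord0) => r i [] /=; lra. Qed.

Lemma P00E : P ord0 ord0 = Creal pa.
Proof. by apply: Cext => //=; rewrite P00_im. Qed.

Lemma pa_ge : d <= pa.
Proof.
pose v := fun i : 'I_k.+1 => if i == ord0 then Defs.C1 else Creal 0.
have h1 : vnorm2 v = 1.
  rewrite /vnorm2 big_ord_recl big1 => [|i _]; rewrite /v /= /Cnorm2 /=; ring.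
have h2 : form P v = P ord0 ord0.
  rewrite /form (Csum_delta ord0) => [|i Hi].
    rewrite (Csum_delta ord0) => [|j Hj]; rewrite /v eqxx.
      cring.
    rewrite (negbTE Hj); cring.
  apply: Csum0 => j; rewrite /v (negbTE Hi); cring.
have := hpd v; rewrite h1 h2 /pa; lra.
Qed.

Lemma pa_neq0 : pa <> 0.
Proof. have := pa_ge; lra. Qed.

Definition Qs : 'M[Cplx]_k := \matrix_(i, j)
  Cadd (P (lift ord0 i) (lift ord0 j))
       (Cmul (Creal (- / pa)) (Cmul (Cconj (P ord0 (lift ord0 i))) (P ord0 (lift ord0 j)))).

Lemma herm_Qs : herm Qs.
Proof. move=> i j; rewrite !mxE hP; cring. Qed.

Lemma pd_Qs : pd Qs d.
Proof.
move=> v.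
pose s := \big[Cadd/Creal 0]_(j < k) Cmul (P ord0 (lift ord0 j)) (v j).
pose x := Cmul (Creal (- / pa)) s.
pose u := fun i : 'I_k.+1 => if unlift ord0 i is Some j then v j else x.
have u0 : u ord0 = x by rewrite /u unlift_none.
have uS : forall j, u (lift ord0 j) = v j by move=> j; rewrite /u liftK.
have hn : vnorm2 u = Cnorm2 x + vnorm2 v.
  by rewrite /vnorm2 big_ord_recl u0; congr Rplus; apply: eq_bigr => j _; rewrite uS.
have hF : form P u = form Qs v.
  rewrite /form big_ord_recl big_ord_recl u0.
  under [X in Cadd _ X = _]eq_bigr => i _ do rewrite big_ord_recl !uS.
  rewrite big_split /=.
  under [X in _ = X]eq_bigr => i _ do (under eq_bigr => j _ do rewrite mxE).
  have e1 : \big[Cadd/Creal 0]_(j < k) Cmul (Cmul (Cconj x) (P ord0 (lift ord0 j))) (u (lift ord0 j))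
       = Cmul (Cconj x) s.
    rewrite Cmul_sumr; apply: eq_bigr => j _; rewrite uS; cring.
  have e2 : \big[Cadd/Creal 0]_(i < k) Cmul (Cmul (Cconj (v i)) (P (lift ord0 i) ord0)) (u ord0)
       = Cmul (Cconj s) x.
    rewrite u0 Cconj_sum Cmul_suml; apply: eq_bigr => i _; rewrite hP; cring.
  have e3 : \big[Cadd/Creal 0]_(i < k) \big[Cadd/Creal 0]_(j < k)
       Cmul (Cmul (Cconj (v i)) (Cadd (P (lift ord0 i) (lift ord0 j))
         (Cmul (Creal (- / pa)) (Cmul (Cconj (P ord0 (lift ord0 i))) (P ord0 (lift ord0 j)))))) (v j)
     = Cadd (\big[Cadd/Creal 0]_(i < k) \big[Cadd/Creal 0]_(j < k)
               Cmul (Cmul (Cconj (v i)) (P (lift ord0 i) (lift ord0 j))) (v j))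
            (Cmul (Creal (- / pa)) (Cmul (Cconj s) s)).
    rewrite Cconj_sum Cmul_suml Cmul_sumr -big_split; apply: eq_bigr => i _.
    rewrite Cmul_sumr Cmul_sumr -big_split; apply: eq_bigr => j _; cring.
  have e4 : \big[Cadd/Creal 0]_(i < k) \big[Cadd/Creal 0]_(j < k)
       Cmul (Cmul (Cconj (v i)) (P (lift ord0 i) (lift ord0 j))) (u (lift ord0 j)) =
     \big[Cadd/Creal 0]_(i < k) \big[Cadd/Creal 0]_(j < k)
       Cmul (Cmul (Cconj (v i)) (P (lift ord0 i) (lift ord0 j))) (v j).
    by apply: eq_bigr => i _; apply: eq_bigr => j _; rewrite uS.
  rewrite e1 e2 e4 e3 P00E /x.
  move: (\big[Cadd/Creal 0]_(i < k) _) => F.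
  have Hpa := pa_neq0.
  apply: Cext => /=; field; exact: Hpa.
have hx : 0 <= Cnorm2 x by rewrite /Cnorm2; nra.
have := hpd u; rewrite hF hn; nra.
Qed.

Definition wrow : 'M[Cplx]_(1, k.+1) := \matrix_(p, j) P ord0 j.
Definition Emx : 'M[Cplx]_(k, k.+1) :=
  \matrix_(p, i) if i == lift ord0 p then Defs.C1 else Creal 0.

Lemma chol_decomp i j :
  P i j = Cadd (Cmul (Creal (/ pa)) (cmx wrow O1 i j)) (cmx Emx Qs i j).
Proof.
have Hpa := pa_neq0.
rewrite !mxE !big_ord1 !mxE.
case: (unliftP ord0 i) => [i'|] ->.
- rewrite (Csum_delta i') => [|p Hp]; last first.
    apply: Csum0 => q; rewrite !mxE (inj_eq (@lift_inj _ ord0)) eq_sym (negbTE Hp); cring.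
  rewrite !mxE eqxx.
  case: (unliftP ord0 j) => [j'|] ->.
  + rewrite (Csum_delta j') => [|q Hq]; last first.
      rewrite !mxE (inj_eq (@lift_inj _ ord0)) eq_sym (negbTE Hq); cring.
    rewrite !mxE eqxx; apply: Cext => /=; field; exact: Hpa.
  + rewrite Csum0 => [|q]; last by rewrite !mxE (negbTE (neq_lift _ _)); cring.
    rewrite P00E hP; apply: Cext => /=; field; exact: Hpa.
- rewrite Csum0 => [|p]; last first.
    apply: Csum0 => q; rewrite !mxE (negbTE (neq_lift _ _)); cring.
  rewrite P00E; apply: Cext => /=; field; exact: Hpa.
Qed.
End Chol.

Section ZS.
Variable Z : CVS.
HB.instance Definition _ := Monoid.isComLaw.Build (vcar Z) (vzero Z) (@vadd Z) (@vadd_assoc Z) (@vadd_comm Z) (@vadd_0 Z).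

Notation vz := (vzero Z).

Lemma vscal0 (x : Z) : vscal (Creal 0) x = vz.
Proof.
set y := vscal _ x.
have Hy : y = vadd y y by rewrite /y -vscal_distr_c; congr vscal; cring.
by rewrite -(vadd_opp y) {3}Hy vadd_assoc vadd_opp vadd_0.
Qed.

Lemma vscal_z a : vscal a vz = vz.
Proof. by rewrite -(vscal0 vz) vscal_assoc; congr vscal; cring. Qed.

Lemma vaddr0 (x : Z) : vadd x vz = x.
Proof. by rewrite vadd_comm vadd_0. Qed.

Lemma vscal_sum I (r : seq I) (P : pred I) F a :
  vscal a (\big[@vadd Z/vz]_(i <- r | P i) F i) = \big[@vadd Z/vz]_(i <- r | P i) vscal a (F i).
Proof. apply: (big_morph (vscal a)) => [x y|]; [exact: vscal_distr_v | exact: vscal_z]. Qed.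

Lemma sum_vscal I (r : seq I) (P : pred I) (F : I -> Cplx) (x : Z) :
  \big[@vadd Z/vz]_(i <- r | P i) vscal (F i) x = vscal (\big[Cadd/Creal 0]_(i <- r | P i) F i) x.
Proof.
symmetry; apply: (big_morph (fun a => vscal a x)) => [a b|]; [exact: vscal_distr_c | exact: vscal0].
Qed.

Definition Pe (e : Z) n (P : 'M[Cplx]_n) : 'M[Z]_n := \matrix_(i, j) vscal (P i j) e.

Lemma eI_Pe e n : eI e n = Pe e (Id n).
Proof.
apply/matrixP => i j; rewrite !mxE; case: (_ == _); [by rewrite vscal_1 | by rewrite vscal0].
Qed.

Lemma mx1_Pe e : mx1 e = Pe e O1.
Proof. by apply/matrixP => i j; rewrite !mxE vscal_1. Qed.

Lemma mscal_Pe e n a (P : 'M[Cplx]_n) :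
  mscal a (Pe e P) = Pe e (\matrix_(i, j) Cmul a (P i j)).
Proof. by apply/matrixP => i j; rewrite !mxE vscal_assoc. Qed.

Lemma madd_Pe e n (P Q : 'M[Cplx]_n) :
  madd (Pe e P) (Pe e Q) = Pe e (\matrix_(i, j) Cadd (P i j) (Q i j)).
Proof. by apply/matrixP => i j; rewrite !mxE vscal_distr_c. Qed.

Lemma congr_Pe e n k (X : 'M[Cplx]_(n, k)) P :
  congr_mx X (Pe e P) = Pe e (cmx X P).
Proof.
apply/matrixP => i j; rewrite !mxE -sum_vscal; apply: eq_bigr => p _.
rewrite -sum_vscal; apply: eq_bigr => q _; by rewrite mxE vscal_assoc.
Qed.

Lemma congr_madd n k (X : 'M[Cplx]_(n, k)) (A B : 'M[Z]_n) :
  congr_mx X (madd A B) = madd (congr_mx X A) (congr_mx X B).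
Proof.
apply/matrixP => i j; rewrite !mxE -big_split; apply: eq_bigr => p _.
rewrite -big_split; apply: eq_bigr => q _; by rewrite mxE vscal_distr_v.
Qed.

Lemma congr_mscal n k (X : 'M[Cplx]_(n, k)) a (A : 'M[Z]_n) :
  congr_mx X (mscal a A) = mscal a (congr_mx X A).
Proof.
apply/matrixP => i j; rewrite !mxE vscal_sum; apply: eq_bigr => p _.
rewrite vscal_sum; apply: eq_bigr => q _; rewrite mxE !vscal_assoc; congr vscal; cring.
Qed.
End ZS.

Section Cone.
Unset Implicit Arguments.
Variables (Z : CVS) (C : MatCone Z) (e : Z).
Set Implicit Arguments.
Hypothesis Ham : accretive_AMOU_space C e.
HB.instance Definition _ := Monoid.isComLaw.Build (vcar Z) (vzero Z) (@vadd Z) (@vadd_assoc Z) (@vadd_comm Z) (@vadd_0 Z).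

Lemma Cadd_mx n (A B : 'M[Z]_n) : C n A -> C n B -> C n (madd A B).
Proof. by case: Ham => [[H _] _]; apply: H. Qed.
Lemma Cscal_mx n t (A : 'M[Z]_n) : 0 <= t -> C n A -> C n (mscal (Creal t) A).
Proof. by case: Ham => [[_ [H _]] _]; apply: H. Qed.
Lemma Ccongr_mx n k (X : 'M[Cplx]_(n, k)) A : C n A -> C k (congr_mx X A).
Proof. by case: Ham => [[_ [_ H]] _]; apply: H. Qed.
Lemma Cou n (z : 'M[Z]_n) : exists t, 0 < t /\ C n (madd (mscal (Creal t) (eI e n)) z).
Proof. by case: Ham => _ [_ [[_ H] _]]; apply: H. Qed.
Lemma Carch n (z : 'M[Z]_n) :
  (forall t, 0 < t -> C n (madd (mscal (Creal t) (eI e n)) z)) -> C n z.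
Proof. by case: Ham => _ [_ [_ H]]; apply: H. Qed.

Lemma madd0 n (A : 'M[Z]_n) : madd A (mzero Z n n) = A.
Proof. by apply/matrixP => i j; rewrite !mxE vaddr0. Qed.

Lemma C_eI n : C n (eI e n).
Proof.
case: (Cou (mzero Z n n)) => t [Ht]; rewrite madd0 => H.
have := Cscal_mx (t := / t) ltac:(left; apply: Rinv_0_lt_compat; lra) H.
congr C; apply/matrixP => i j; rewrite !mxE vscal_assoc.
have -> : Cmul (Creal (/ t)) (Creal t) = Defs.C1 by apply: Cext => /=; field; lra.
exact: vscal_1.
Qed.

Lemma C_mx1 : C 1%nat (mx1 e).
Proof.
have -> : mx1 e = eI e 1%nat by apply/matrixP => i j; rewrite !mxE !ord1.
exact: C_eI.
Qed.

Lemma C_0 (A : 'M[Z]_0) : C 0%nat A.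
Proof.
case: (Cou A) => t [_ H]; congr C: H; apply/matrixP => i; by case: i.
Qed.

Lemma C_pd k (P : 'M[Cplx]_k) d : herm P -> 0 < d -> pd P d -> C k (Pe e P).
Proof.
elim: k P d => [|k IH] P d hP hd hpd; first exact: C_0.
have Hpa := pa_ge hpd.
have -> : Pe e P = madd (mscal (Creal (/ pa P)) (congr_mx (wrow P) (mx1 e)))
                        (congr_mx (Emx k) (Pe e (Qs P))).
  rewrite mx1_Pe !congr_Pe mscal_Pe madd_Pe; congr Pe; apply/matrixP => i j.
  by rewrite !mxE {1}(chol_decomp hP hd hpd i j) !mxE.
apply: Cadd_mx.
  apply: Cscal_mx; first by left; apply: Rinv_0_lt_compat; lra.
  apply: Ccongr_mx; exact: C_mx1.
apply: Ccongr_mx; apply: (IH _ d) => //; [exact: herm_Qs | exact: pd_Qs hP hd hpd].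
Qed.

Definition S n (z : 'M[Z]_n) := fun t => 0 < t /\ C n (madd (mscal (Creal t) (eI e n)) (mopp z)).

Lemma nu_glb n (z : 'M[Z]_n) : is_glb (S z) (nu_e C e z).
Proof.
apply: Rinf_spec; last by move=> x [Hx _]; lra.
case: (Cou (mopp z)) => t [Ht H]; by exists t.
Qed.

Lemma nu_ge0 n (z : 'M[Z]_n) : 0 <= nu_e C e z.
Proof. by apply: (glb_ge (nu_glb z)) => x [Hx _]; lra. Qed.

Lemma vcomb (E w : Z) a b c : Cadd a b = c ->
  vadd (vscal a E) (vadd (vscal b E) w) = vadd (vscal c E) w.
Proof. by move=> <-; rewrite vadd_assoc -vscal_distr_c. Qed.

Lemma vACA (x y z t : Z) : vadd (vadd x y) (vadd z t) = vadd (vadd x z) (vadd y t).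
Proof.
by rewrite -!vadd_assoc; congr vadd; rewrite !vadd_assoc; congr vadd; rewrite vadd_comm.
Qed.

Lemma S_up n (z : 'M[Z]_n) t t' : S z t -> t <= t' -> S z t'.
Proof.
move=> [Ht H] Htt; split; first lra.
have -> : madd (mscal (Creal t') (eI e n)) (mopp z) =
          madd (mscal (Creal (t' - t)) (eI e n)) (madd (mscal (Creal t) (eI e n)) (mopp z)).
  apply/matrixP => i j; rewrite !mxE; symmetry; apply: vcomb; cring.
apply: Cadd_mx => //; apply: Cscal_mx; [lra | exact: C_eI].
Qed.

Lemma mopp_mopp n (z : 'M[Z]_n) : mopp (mopp z) = z.
Proof.
apply/matrixP => i j; rewrite !mxE vscal_assoc.
have -> : Cmul Cm1 Cm1 = Defs.C1 by cring.
exact: vscal_1.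
Qed.

Lemma nu_add n (x y : 'M[Z]_n) : nu_e C e (madd x y) <= nu_e C e x + nu_e C e y.
Proof.
have key : forall t s, S x t -> S y s -> nu_e C e (madd x y) <= t + s.
  move=> t s [Ht Hx] [Hs Hy]; apply: (glb_le (nu_glb _)); split; first lra.
  have -> : madd (mscal (Creal (t + s)) (eI e n)) (mopp (madd x y)) =
     madd (madd (mscal (Creal t) (eI e n)) (mopp x)) (madd (mscal (Creal s) (eI e n)) (mopp y)).
    apply/matrixP => i j; rewrite !mxE vACA -vscal_distr_c -vscal_distr_v.
    congr vadd; congr vscal; cring.
  exact: Cadd_mx.
have h1 : forall s, S y s -> nu_e C e (madd x y) - s <= nu_e C e x.
  move=> s Hs; apply: (glb_ge (nu_glb x)) => t Ht; have := key _ _ Ht Hs; lra.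
have : nu_e C e (madd x y) - nu_e C e x <= nu_e C e y.
  apply: (glb_ge (nu_glb y)) => s Hs; have := h1 _ Hs; lra.
lra.
Qed.

Lemma nu_scal n t (x : 'M[Z]_n) : 0 <= t -> nu_e C e (mscal (Creal t) x) = t * nu_e C e x.
Proof.
case=> Ht; last first.
  subst t; rewrite Rmult_0_l; apply: Rle_antisym; last exact: nu_ge0.
  apply: le_eps => d Hd; rewrite Rplus_0_l; apply: (glb_le (nu_glb _)); split => //.
  have -> : madd (mscal (Creal d) (eI e n)) (mopp (mscal (Creal 0) x)) = mscal (Creal d) (eI e n).
    by apply/matrixP => i j; rewrite !mxE vscal0 vscal_z vaddr0.
  apply: Cscal_mx; [lra | exact: C_eI].
have a1 : forall s, S x s -> S (mscal (Creal t) x) (t * s).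
  move=> s [Hs H]; split; first nra.
  have -> : madd (mscal (Creal (t * s)) (eI e n)) (mopp (mscal (Creal t) x)) =
            mscal (Creal t) (madd (mscal (Creal s) (eI e n)) (mopp x)).
    apply/matrixP => i j; rewrite !mxE vscal_distr_v !vscal_assoc.
    congr vadd; congr vscal; cring.
  apply: Cscal_mx => //; lra.
have a2 : forall u, S (mscal (Creal t) x) u -> S x (u / t).
  move=> u [Hu H]; split; first by apply: Rdiv_lt_0_compat.
  have -> : madd (mscal (Creal (u / t)) (eI e n)) (mopp x) =
            mscal (Creal (/ t)) (madd (mscal (Creal u) (eI e n)) (mopp (mscal (Creal t) x))).
    apply/matrixP => i j; rewrite !mxE vscal_distr_v !vscal_assoc.
    have -> : Cmul (Cmul (Creal (/ t)) Cm1) (Creal t) = Cm1 by apply: Cext => /=; field; lra.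
    congr vadd; congr vscal; apply: Cext => /=; field; lra.
  apply: Cscal_mx => //; left; apply: Rinv_0_lt_compat; lra.
apply: Rle_antisym.
- have : nu_e C e (mscal (Creal t) x) / t <= nu_e C e x.
    apply: (glb_ge (nu_glb x)) => s Hs.
    have := glb_le (nu_glb _) (a1 _ Hs).
    move=> h; apply: (Rmult_le_reg_l t) => //.
    set N := nu_e C e _ in h *.
    replace (t * (N / t)) with N by (field; lra); lra.
  set N := nu_e C e _; move=> h; have := Rmult_le_compat_l t _ _ (Rlt_le _ _ Ht) h.
  replace (t * (N / t)) with N by (field; lra); lra.
- apply: (glb_ge (nu_glb _)) => u Hu.
  have := glb_le (nu_glb x) (a2 _ Hu) => h.
  have := Rmult_le_compat_l t _ _ (Rlt_le _ _ Ht) h.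
  replace (t * (u / t)) with u by (field; lra); lra.
Qed.

Lemma nu_congr n k (X : 'M[Cplx]_(n, k)) (A : 'M[Z]_n) c :
  opnorm_bound X c -> nu_e C e (congr_mx X A) <= c * c * nu_e C e A.
Proof.
move=> [Hc Hb].
have key : forall t d, S A t -> 0 < d -> nu_e C e (congr_mx X A) <= t * (c * c) + d.
  move=> t d [Ht HA] Hd; apply: (glb_le (nu_glb _)); split.
    have : 0 <= t * (c * c) by apply: Rmult_le_pos; nra.
    lra.
  pose lam := t * (c * c) + d.
  pose M := lincomb (Id k) (XX X) lam (- t).
  have hM : herm M by rewrite /M /lincomb; apply: herm_lin; [exact: herm_Id | exact: herm_XX].
  have pM : pd M d.
    move=> v; rewrite /M /lincomb form_lin /= form_Id form_XX.
    have := Hb v; have : 0 <= vnorm2 v by apply: Rsum_ge0 => i _; rewrite /Cnorm2; nra.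
    move=> h0 h1; have := Rmult_le_compat_l t _ _ (Rlt_le _ _ Ht) h1.
    rewrite /lam; nra.
  have CM := C_pd hM Hd pM.
  have CX := Ccongr_mx X HA.
  have -> : madd (mscal (Creal lam) (eI e k)) (mopp (congr_mx X A)) =
            madd (congr_mx X (madd (mscal (Creal t) (eI e n)) (mopp A))) (Pe e M).
    rewrite congr_madd /mopp congr_mscal congr_mscal !eI_Pe congr_Pe cmx_Id.
    move: (congr_mx X A) => B.
    apply/matrixP => i j; rewrite !mxE.
    rewrite -[in RHS]vadd_assoc [in X in _ = vadd _ X]vadd_comm vadd_assoc.
    rewrite !vscal_assoc -vscal_distr_c; congr vadd; congr vscal.
    cring.
  exact: Cadd_mx.
have k2 : forall t, S A t -> nu_e C e (congr_mx X A) <= t * (c * c).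
  move=> t Ht; apply: le_eps => d Hd; exact: key.
have hcc : 0 <= c * c by nra.
case: hcc => hcc; last first.
  rewrite -hcc Rmult_0_l; case: (Cou (mopp A)) => t [Ht H].
  have := k2 t (conj Ht H); rewrite -hcc Rmult_0_r; lra.
have : nu_e C e (congr_mx X A) / (c * c) <= nu_e C e A.
  apply: (glb_ge (nu_glb A)) => t Ht; have := k2 t Ht.
  set N := nu_e C e _ => h.
  apply: (Rmult_le_reg_l (c * c)) => //.
  replace (c * c * (N / (c * c))) with N by (field; nra); nra.
set N := nu_e C e _ => h; have := Rmult_le_compat_l (c * c) _ _ (Rlt_le _ _ hcc) h.
replace (c * c * (N / (c * c))) with N by (field; nra); nra.
Qed.

Lemma vsum_delta n (i0 : 'I_n) (F : 'I_n -> Z) :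
  (forall i, i != i0 -> F i = vzero Z) -> \big[@vadd Z/vzero Z]_(i < n) F i = F i0.
Proof. by move=> H; rewrite (bigD1 i0) //= big1 ?vaddr0. Qed.
Arguments vsum_delta [n] i0 [F].
Lemma vsum0 n (F : 'I_n -> Z) :
  (forall i, F i = vzero Z) -> \big[@vadd Z/vzero Z]_(i < n) F i = vzero Z.
Proof. by move=> H; rewrite big1. Qed.

Definition selmx N k (f : 'I_k -> 'I_N) : 'M[Cplx]_(N, k) :=
  \matrix_(p, i) if p == f i then Defs.C1 else Creal 0.
Definition embmx n N (h : 'I_n -> 'I_N) : 'M[Cplx]_(n, N) :=
  \matrix_(p, i) if i == h p then Defs.C1 else Creal 0.

Lemma coef11 (x : Z) : vscal (Cmul (Cconj Defs.C1) Defs.C1) x = x.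
Proof. by rewrite -[RHS]vscal_1; congr vscal; cring. Qed.
Lemma coef0l a (x : Z) : vscal (Cmul (Cconj (Creal 0)) a) x = vzero Z.
Proof. by rewrite -(vscal0 x); congr vscal; cring. Qed.
Lemma coef0r a (x : Z) : vscal (Cmul a (Creal 0)) x = vzero Z.
Proof. by rewrite -(vscal0 x); congr vscal; cring. Qed.

Lemma congr_sel N k (f : 'I_k -> 'I_N) (M : 'M[Z]_N) i j :
  congr_mx (selmx f) M i j = M (f i) (f j).
Proof.
rewrite mxE (vsum_delta (f i)) => [|p Hp]; last first.
  by apply: vsum0 => q; rewrite !mxE (negbTE Hp) coef0l.
rewrite (vsum_delta (f j)) => [|q Hq]; last by rewrite !mxE (negbTE Hq) coef0r.
by rewrite !mxE !eqxx coef11.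
Qed.

Lemma congr_emb n N (h : 'I_n -> 'I_N) (hi : injective h) (M : 'M[Z]_n) i j :
  congr_mx (embmx h) M (h i) (h j) = M i j.
Proof.
rewrite mxE (vsum_delta i) => [|p Hp]; last first.
  have Hf : (h i == h p) = false by rewrite (inj_eq hi) eq_sym (negbTE Hp).
  by apply: vsum0 => q; rewrite !mxE Hf coef0l.
rewrite (vsum_delta j) => [|q Hq]; last first.
  have Hf : (h j == h q) = false by rewrite (inj_eq hi) eq_sym (negbTE Hq).
  by rewrite !mxE Hf coef0r.
by rewrite !mxE !eqxx coef11.
Qed.

Lemma congr_emb0l n N (h : 'I_n -> 'I_N) (M : 'M[Z]_n) i j :
  (forall p, (i == h p) = false) -> congr_mx (embmx h) M i j = vzero Z.
Proof. by move=> H; rewrite mxE; apply: vsum0 => p; apply: vsum0 => q; rewrite !mxE H coef0l. Qed.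
Lemma congr_emb0r n N (h : 'I_n -> 'I_N) (M : 'M[Z]_n) i j :
  (forall q, (j == h q) = false) -> congr_mx (embmx h) M i j = vzero Z.
Proof. by move=> H; rewrite mxE; apply: vsum0 => p; apply: vsum0 => q; rewrite !mxE H coef0r. Qed.

Lemma dsum_decomp n m (A : 'M[Z]_n) (B : 'M[Z]_m) :
  dsum A B = madd (congr_mx (embmx (lshift m)) A) (congr_mx (embmx (@rshift n m)) B).
Proof.
apply/matrixP => i j; rewrite [RHS]mxE /dsum.
case: (split_ordP i) => i' ->; case: (split_ordP j) => j' ->.
- rewrite block_mxEul congr_emb; last exact: lshift_inj.
  by rewrite congr_emb0l ?vaddr0 // => p; rewrite eq_lrshift.
- rewrite block_mxEur mxE congr_emb0r => [|q]; last by rewrite eq_rlshift.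
  by rewrite congr_emb0l ?vaddr0 // => p; rewrite eq_lrshift.
- rewrite block_mxEdl mxE congr_emb0l => [|p]; last by rewrite eq_rlshift.
  by rewrite congr_emb0r ?vaddr0 // => q; rewrite eq_lrshift.
- rewrite block_mxEdr (congr_emb (@rshift_inj n m)).
  by rewrite congr_emb0l ?vadd_0 // => p; rewrite eq_rlshift.
Qed.

Lemma C_dsum n m (A : 'M[Z]_n) (B : 'M[Z]_m) : C n A -> C m B -> C (n + m)%nat (dsum A B).
Proof.
move=> hA hB; rewrite dsum_decomp; apply: Cadd_mx; exact: Ccongr_mx.
Qed.

Lemma entry_sub n (z : 'M[Z]_n) t i j :
  (madd (mscal (Creal t) (eI e n)) (mopp z)) i j =
  vadd (vscal (Creal t) (if i == j then e else vzero Z)) (vscal Cm1 (z i j)).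
Proof. by rewrite !mxE. Qed.

Lemma nu_dsum n m (A : 'M[Z]_n) (B : 'M[Z]_m) :
  nu_e C e (dsum A B) = Rmax (nu_e C e A) (nu_e C e B).
Proof.
apply: Rle_antisym.
- have key : forall t s, S A t -> S B s -> nu_e C e (dsum A B) <= Rmax t s.
    move=> t s Ht Hs.
    have [Ha Ca] := S_up Ht (Rmax_l t s).
    have [_ Cb] := S_up Hs (Rmax_r t s).
    apply: (glb_le (nu_glb _)); split => //.
    set M := Rmax t s in Ca Cb *.
    have -> : madd (mscal (Creal M) (eI e (n + m))) (mopp (dsum A B)) =
              dsum (madd (mscal (Creal M) (eI e n)) (mopp A))
                   (madd (mscal (Creal M) (eI e m)) (mopp B)).
      apply/matrixP => i j; rewrite entry_sub /dsum.
      case: (split_ordP i) => i' ->; case: (split_ordP j) => j' ->.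
      + by rewrite !block_mxEul entry_sub eq_lshift.
      + by rewrite !block_mxEur eq_lrshift !mxE vscal_z vscal_z vaddr0.
      + by rewrite !block_mxEdl eq_rlshift !mxE vscal_z vscal_z vaddr0.
      + by rewrite !block_mxEdr entry_sub eq_rshift.
    exact: C_dsum.
  set N := nu_e C e (dsum A B).
  apply: Rnot_lt_le => HN.
  have ex : forall k (z : 'M[Z]_k), nu_e C e z < N -> exists t, S z t /\ t < N.
    move=> k z Hz; apply: NNPP => H'.
    have : N <= nu_e C e z.
      apply: (glb_ge (nu_glb z)) => t Ht; apply: Rnot_lt_le => Hlt; apply: H'; by exists t.
    lra.
  have [t [Ht Htl]] := ex _ A (Rle_lt_trans _ _ _ (Rmax_l _ _) HN).
  have [s [Hs Hsl]] := ex _ B (Rle_lt_trans _ _ _ (Rmax_r _ _) HN).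
  have h2 := key _ _ Ht Hs; rewrite -/N in h2; have := Rmax_lub_lt _ _ _ Htl Hsl; lra.
- apply: (glb_ge (nu_glb _)) => u [Hu Hc].
  apply: Rmax_lub.
  + apply: (glb_le (nu_glb _)); split => //.
    have -> : madd (mscal (Creal u) (eI e n)) (mopp A) =
      congr_mx (selmx (lshift m)) (madd (mscal (Creal u) (eI e (n + m))) (mopp (dsum A B))).
      apply/matrixP => i j; rewrite congr_sel !entry_sub eq_lshift /dsum block_mxEul //.
    exact: Ccongr_mx.
  + apply: (glb_le (nu_glb _)); split => //.
    have -> : madd (mscal (Creal u) (eI e m)) (mopp B) =
      congr_mx (selmx (@rshift n m)) (madd (mscal (Creal u) (eI e (n + m))) (mopp (dsum A B))).
      apply/matrixP => i j; rewrite congr_sel !entry_sub eq_rshift /dsum block_mxEdr //.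
    exact: Ccongr_mx.
Qed.

Lemma nu_char n (z : 'M[Z]_n) : C n z <-> nu_e C e (mopp z) = 0.
Proof.
split.
- move=> Hz; apply: Rle_antisym; last exact: nu_ge0.
  apply: le_eps => d Hd; rewrite Rplus_0_l; apply: (glb_le (nu_glb _)); split => //.
  rewrite mopp_mopp; apply: Cadd_mx => //; apply: Cscal_mx; [lra | exact: C_eI].
- move=> H0; apply: Carch => t Ht.
  have [s [Hs Hst]] : exists s, S (mopp z) s /\ s < t.
    apply: NNPP => H'.
    have : t <= nu_e C e (mopp z).
      apply: (glb_ge (nu_glb _)) => s Hs; apply: Rnot_lt_le => Hlt; apply: H'; by exists s.
    lra.
  have [_ ] := S_up Hs (Rlt_le _ _ Hst); by rewrite mopp_mopp.
Qed.

End Cone.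

Theorem lemma4p5 (Z : CVS) (C : MatCone Z) (e : Z) :
  accretive_AMOU_space C e ->
  is_matrix_gauge (nu_e C e) /\
  (forall n (z : 'M[Z]_n), C n z <-> nu_e C e (mopp z) = 0).
Proof.
move=> H; split; last by move=> n z; exact: (nu_char H).
split; first by move=> n x; exact: (nu_ge0 H).
split; first by move=> n x y; exact: (nu_add H).
split; first by move=> n t x Ht; exact: (nu_scal H).
split; first by move=> n k X A c Hc; exact: (nu_congr H).
by move=> n m A B; exact: (nu_dsum H).
Qed.
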